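(* Let $X$ be a comical set and let $f,g$ be $1$-cubes with $f\partial_{1,1}=g\partial_{1,0}$. Then any two composites of $f$ and $g$ (of any of the four kinds) are homotopic.
   Context: Cubical sets are presheaves on the box category $\square$ (objects $[1]^n=\{0<1\}^n$; morphisms generated by faces $\partial_{i,\varepsilon}$ inserting $\varepsilon$ as $i$-th coordinate, degeneracies $\sigma_i$ deleting the $i$-th coordinate, and max/min connections $\gamma_{i,1},\gamma_{i,0}$); operators act on the right, so for a $0$-cube $x$, $x\sigma_1$ is the degenerate $1$-cube at $x$. A cube is degenerate if it is $x\sigma_i$ or $x\gamma_{i,\varepsilon}$; composites of faces have unique normal forms $\partial_{k_1,\varepsilon_1}\cdots\partial_{k_t,\varepsilon_t}$, $k_1>\dots>k_t$. A marked cubical set is a cubical set with marked cubes of positive dimension containing all degenerate cubes. $\tau_jX$ is $X$ with all cubes of dimension $\ge j+1$ marked. $\square^n_{k,\varepsilon}$ ($n\ge1$, $1\le k\le n$) is $\square^n$ in which a non-degenerate positive-dimensional face in normal form is marked iff none of its factors is $\partial_{k-1,\varepsilon},\partial_{k,0},\partial_{k,1},\partial_{k+1,\varepsilon}$; $\sqcap^n_{k,\varepsilon}$ is the union of codimension-one faces except $\partial_{k,\varepsilon}$, regularly marked; for $n\ge2$, $(\square^n_{k,\varepsilon})''=\tau_{n-2}\square^n_{k,\varepsilon}$ and $(\square^n_{k,\varepsilon})'$ is $\square^n_{k,\varepsilon}$ with all $(n-1)$-faces other than $\partial_{k,\varepsilon}$ marked. A comical set is a marked cubical set with the right lifting property against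 all $\sqcap^n_{k,\varepsilon}\hookrightarrow\square^n_{k,\varepsilon}$ and $(\square^n_{k,\varepsilon})'\hookrightarrow(\square^n_{k,\varepsilon})''$. Write a $2$-cube $s$ via its faces $(s\partial_{1,0},s\partial_{1,1},s\partial_{2,0},s\partial_{2,1})$. For $1$-cubes $f,g$ from $x$ to $y$ ($f\partial_{1,0}=x$, $f\partial_{1,1}=y$, same for $g$), $f\sim g$ (homotopic) means there is a marked $2$-cube with faces $(g,y\sigma_1,f,y\sigma_1)$ (equivalently, in a comical set, with faces $(x\sigma_1,f,x\sigma_1,g)$, or any of six other analogous configurations). Given $f$ from $x$ to $y$ and $g$ from $y$ to $z$, a $1$-cube $a$ is a $(1,0)$-composite of $f,g$ if there is a marked $2$-cube with faces $(a,g,f,z\sigma_1)$; $b$ is a $(1,1)$-composite if there is a marked $2$-cube with faces $(f,b,x\sigma_1,g)$; $c$ is a $(2,0)$-composite if there is a marked $2$-cube with faces $(f,z\sigma_1,c,g)$; $d$ is a $(2,1)$-composite if there is a marked $2$-cube with faces $(x\sigma_1,g,f,d)$. A composite of $f$ and $g$ is a composite of any of these four kinds (each is a $1$-cube from $x$ to $z$). *)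

(* Defs.v *)
(* Coordinates and operator indices are 0-based here: the paper's
   d_{i,e}, sigma_i, gamma_{i,e} (1-based) are dface _ (i-1) e,
   dsigma _ (i-1), dgamma _ (i-1) e. *)
From mathcomp Require Import all_boot.


(* The vertices of the poset [1]^n = {0<1}^n. *)
Definition pt (n : nat) := n.-tuple bool.

Definition dface n (i : nat) (e : bool) (y : pt n) : pt n.+1 :=
  [tuple (if (j : nat) < i then nth false y j
          else if (j : nat) == i then e else nth false y (j : nat).-1) | j < n.+1].

Definition dsigma n (i : nat) (y : pt n.+1) : pt n :=
  [tuple (if (j : nat) < i then nth false y j else nth false y (j : nat).+1) | j < n].

Definition dgamma n (i : nat) (e : bool) (y : pt n.+2) : pt n.+1 :=
  [tuple (if (j : nat) < i then nth false y j
          else if (j : nat) == i then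
            (if e then nth false y i || nth false y i.+1
             else nth false y i && nth false y i.+1)
          else nth false y (j : nat).+1) | j < n.+1].

(* The box category: the subcategory of posets generated by faces,
   degeneracies and connections (morphisms compared extensionally). *)
Inductive in_box : forall m n : nat, (pt m -> pt n) -> Prop :=
| box_id n : in_box n n (fun y : pt n => y)
| box_face n (i : nat) (e : bool) : i < n.+1 -> in_box n n.+1 (dface n i e)
| box_degen n (i : nat) : i < n.+1 -> in_box n.+1 n (dsigma n i)
| box_conn n (i : nat) (e : bool) : i < n.+1 -> in_box n.+2 n.+1 (dgamma n i e)
| box_comp l m n (f : pt l -> pt m) (g : pt m -> pt n) :
    in_box l m f -> in_box m n g -> in_box l n (fun y => g (f y))
| box_ext m n (f g : pt m -> pt n) : f =1 g -> in_box m n f -> in_box m n g.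
Arguments in_box {m n} f.

(* Cubical sets = presheaves on the box category; operators act on the right:
   for x in X_n and phi : [1]^m -> [1]^n, act phi x = x phi in X_m. *)
Record cubical_set := CubicalSet {
  cell :> nat -> Type;
  act : forall m n (f : pt m -> pt n), in_box f -> cell n -> cell m;
  act_ext : forall m n (f g : pt m -> pt n) (hf : in_box f) (hg : in_box g),
      f =1 g -> forall x, act m n f hf x = act m n g hg x;
  act_id : forall n (h : in_box (fun y : pt n => y)) x, act n n _ h x = x;
  act_comp : forall l m n (f : pt l -> pt m) (g : pt m -> pt n)
      (hf : in_box f) (hg : in_box g) (hgf : in_box (fun y => g (f y))) x,
      act l n _ hgf x = act l m f hf (act m n g hg x) }.
Arguments act {c m n f} h x.

Inductive is_degen : forall n m : nat, (pt n -> pt m) -> Prop :=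
| isdeg_sigma m (i : nat) : i < m.+1 -> is_degen m.+1 m (dsigma m i)
| isdeg_conn m (i : nat) (e : bool) : i < m.+1 -> is_degen m.+2 m.+1 (dgamma m i e).
Arguments is_degen {n m} f.

Definition degenerate (X : cubical_set) n (x : X n) : Prop :=
  exists m (d : pt n -> pt m) (h : in_box d) (y : X m), is_degen d /\ x = act h y.
Arguments degenerate {X n} x.

Record marked_cset := MarkedCSet {
  mc_base :> cubical_set;
  marked : forall n, mc_base n -> Prop;
  marked_pos : forall n (x : mc_base n), marked n x -> 0 < n;
  marked_degen : forall n (x : mc_base n), degenerate x -> marked n x }.
Arguments marked {m n} x.

Definition faceX (X : cubical_set) n (x : X n.+1) (i : 'I_n.+1) (e : bool) : X n :=
  act (box_face n i e (ltn_ord i)) x.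
Arguments faceX {X n} x i e.

(* composites of face maps (the non-degenerate cubes of the representable) *)
Inductive is_face : forall m n : nat, (pt m -> pt n) -> Prop :=
| isf_id n : is_face n n (fun y : pt n => y)
| isf_step m n (f : pt m -> pt n) (i : nat) (e : bool) :
    i < n.+1 -> is_face m n f -> is_face m n.+1 (fun y => dface n i e (f y)).
Arguments is_face {m n} f.

Definition degenerate_map m n (phi : pt m -> pt n) : Prop :=
  exists l (d : pt m -> pt l) (psi : pt l -> pt n),
    in_box psi /\ is_degen d /\ phi =1 (fun y => psi (d y)).
Arguments degenerate_map {m n} phi.

(* For a face phi, coordinate j is constantly v on it iff d_{j,v} is one of
   the factors of its normal form. *)
Definition coord_fixed m n (phi : pt m -> pt n) (j : 'I_n) (v : bool) : Prop :=
  forall y, tnth (phi y) j = v.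
Arguments coord_fixed {m n} phi j v.

(* normal form of the face contains none of d_{k-1,e}, d_{k,0}, d_{k,1}, d_{k+1,e} *)
Definition face_ok n (k : 'I_n) (e : bool) m (phi : pt m -> pt n) : Prop :=
  ~ coord_fixed phi k false /\ ~ coord_fixed phi k true /\
  (forall j : 'I_n, (j.+1 = k \/ (j : nat) = k.+1) -> ~ coord_fixed phi j e).
Arguments face_ok {n} k e {m} phi.

Definition box_marked n (k : 'I_n) (e : bool) m (phi : pt m -> pt n) : Prop :=
  0 < m /\ (degenerate_map phi \/ (is_face phi /\ face_ok k e phi)).
Arguments box_marked {n} k e {m} phi.

Definition prime_marked n (k : 'I_n) (e : bool) m (phi : pt m -> pt n) : Prop :=
  box_marked k e phi \/ (m.+1 = n /\ is_face phi /\ ~ coord_fixed phi k e).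
Arguments prime_marked {n} k e {m} phi.

(* marked cubes of (box^n_{k,e})'' = tau_{n-2} box^n_{k,e} *)
Definition tau_marked n (k : 'I_n) (e : bool) m (phi : pt m -> pt n) : Prop :=
  box_marked k e phi \/ n <= m.+1.
Arguments tau_marked {n} k e {m} phi.

(* the map (representable [1]^n, marking M) -> X classifying x is a map of
   marked cubical sets *)
Definition preserves (X : marked_cset) n
    (M : forall m, (pt m -> pt n) -> Prop) (x : X n) : Prop :=
  forall m (phi : pt m -> pt n) (h : in_box phi), M m phi -> marked (act h x).
Arguments preserves {X n} M x.

(* A map of marked cubical sets from the open box sqcap^{n+1}_{k,e} (union of
   the faces d_{i,d}, (i,d) <> (k,e), regularly marked) to X: an n-cube
   xs i d for each such face, agreeing on pairwise intersections, and sending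
   marked cubes to marked cubes. *)
Definition openbox (X : marked_cset) n (k : 'I_n.+1) (e : bool)
    (xs : 'I_n.+1 -> bool -> X n) : Prop :=
  (forall (i j : 'I_n.+1) (d d' : bool), (i, d) != (k, e) -> (j, d') != (k, e) ->
     forall m (psi psi' : pt m -> pt n) (h : in_box psi) (h' : in_box psi'),
       (forall y, dface n i d (psi y) = dface n j d' (psi' y)) ->
       act h (xs i d) = act h' (xs j d')) /\
  (forall (i : 'I_n.+1) (d : bool), (i, d) != (k, e) ->
     forall m (psi : pt m -> pt n) (h : in_box psi),
       box_marked k e (fun y => dface n i d (psi y)) -> marked (act h (xs i d))).
Arguments openbox {X n} k e xs.

(* comical sets: right lifting property against the open-box inclusions
   sqcap^n_{k,e} -> box^n_{k,e} (n >= 1) and against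
   (box^n_{k,e})' -> (box^n_{k,e})'' (n >= 2). *)
Definition comical (X : marked_cset) : Prop :=
  (forall n (k : 'I_n.+1) (e : bool) (xs : 'I_n.+1 -> bool -> X n),
     openbox k e xs ->
     exists x : X n.+1,
       (forall (i : 'I_n.+1) (d : bool), (i, d) != (k, e) -> faceX x i d = xs i d) /\
       preserves (fun m (phi : pt m -> pt n.+1) => box_marked k e phi) x) /\
  (forall n (k : 'I_n.+2) (e : bool) (x : X n.+2),
     preserves (fun m (phi : pt m -> pt n.+2) => prime_marked k e phi) x ->
     preserves (fun m (phi : pt m -> pt n.+2) => tau_marked k e phi) x).

Definition src (X : cubical_set) (f : X 1) : X 0 := faceX f ord0 false.
Arguments src {X} _.
Definition tgt (X : cubical_set) (f : X 1) : X 0 := faceX f ord0 true.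
Arguments tgt {X} _.

Definition cdeg (X : cubical_set) (x : X 0) : X 1 := act (box_degen 0 0 isT) x.
Arguments cdeg {X} _.

Definition faces2 (X : cubical_set) (s : X 2) : X 1 * X 1 * X 1 * X 1 :=
  (faceX s (@ord0 1) false, faceX s (@ord0 1) true,
   faceX s (@ord_max 1) false, faceX s (@ord_max 1) true).
Arguments faces2 {X} _.

Definition homotopic (X : marked_cset) (f g : X 1) : Prop :=
  src f = src g /\ tgt f = tgt g /\
  exists s : X 2, marked s /\ faces2 s = (g, cdeg (tgt f), f, cdeg (tgt f)).
Arguments homotopic {X} f g.

(* a is a composite (of one of the four kinds (1,0),(1,1),(2,0),(2,1)) of
   f : x -> y and g : y -> z *)
Definition composite (X : marked_cset) (f g a : X 1) : Prop :=
  exists s : X 2, marked s /\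
    (faces2 s = (a, g, f, cdeg (tgt g)) \/
     faces2 s = (f, a, cdeg (src f), g) \/
     faces2 s = (f, cdeg (tgt g), a, g) \/
     faces2 s = (cdeg (src f), g, f, a)).
Arguments composite {X} f g a.

(* Main.v *)
Require Import Defs.
From mathcomp Require Import all_boot.
Set Implicit Arguments. Unset Strict Implicit.

Lemma enumI3 : enum 'I_3 = [:: @Ordinal 3 0 isT; @Ordinal 3 1 isT; @Ordinal 3 2 isT].
Proof. by apply: (inj_map val_inj); rewrite val_enum_ord. Qed.
Lemma enumI2 : enum 'I_2 = [:: @Ordinal 2 0 isT; @Ordinal 2 1 isT].
Proof. by apply: (inj_map val_inj); rewrite val_enum_ord. Qed.
Lemma enumI1 : enum 'I_1 = [:: @Ordinal 1 0 isT].
Proof. by apply: (inj_map val_inj); rewrite val_enum_ord. Qed.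
Lemma enumI0 : enum 'I_0 = [::].
Proof. by apply: (inj_map val_inj); rewrite val_enum_ord. Qed.
Ltac cmp := rewrite /dface /dsigma /dgamma /= ?enumI3 ?enumI2 ?enumI1 ?enumI0 /= ?enumI3 ?enumI2 ?enumI1 ?enumI0 /=.
Ltac dt y := case: y => [[|[] [|[] [|[] [|? ?]]]] //] ?.
Ltac pw := let y := fresh "y" in move=> y; apply: val_inj; dt y; cmp.

Section Act.
Variable X : cubical_set.

Lemma act_swap l m m' n (p1 : pt l -> pt m) (p2 : pt m -> pt n)
  (p3 : pt l -> pt m') (p4 : pt m' -> pt n)
  (h1 : in_box p1) (h2 : in_box p2) (h3 : in_box p3) (h4 : in_box p4) (x : X n) :
  (forall y, p2 (p1 y) = p4 (p3 y)) -> act h1 (act h2 x) = act h3 (act h4 x).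
Proof.
move=> E.
rewrite -(act_comp X _ _ _ _ _ h1 h2 (@box_comp _ _ _ _ _ h1 h2)) -(act_comp X _ _ _ _ _ h3 h4 (@box_comp _ _ _ _ _ h3 h4)).
exact: act_ext.
Qed.

Lemma act_id1 l m (p1 : pt l -> pt m) (p2 : pt m -> pt l)
  (h1 : in_box p1) (h2 : in_box p2) (x : X l) :
  (forall y, p2 (p1 y) = y) -> act h1 (act h2 x) = x.
Proof.
move=> E.
rewrite -(act_comp X _ _ _ _ _ h1 h2 (@box_comp _ _ _ _ _ h1 h2)) -[RHS](act_id X _ (box_id l)).
exact: act_ext.
Qed.

Lemma act_fact l m n (p1 : pt l -> pt m) (p2 : pt m -> pt n) (q : pt l -> pt n)
  (h1 : in_box p1) (h2 : in_box p2) (hq : in_box q) (x : X n) :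
  (forall y, q y = p2 (p1 y)) -> act hq x = act h1 (act h2 x).
Proof.
move=> E. rewrite -(act_comp X _ _ _ _ _ h1 h2 (@box_comp _ _ _ _ _ h1 h2)). exact: act_ext.
Qed.

Lemma act_idm l (q : pt l -> pt l) (hq : in_box q) (x : X l) :
  (forall y, q y = y) -> act hq x = x.
Proof. move=> E; rewrite -[RHS](act_id X _ (box_id l)); exact: act_ext. Qed.

Definition sqs1 (g : X 1) : X 2 := act (box_degen 1 0 isT) g.
Definition sqs2 (g : X 1) : X 2 := act (box_degen 1 1 isT) g.
Definition sqmax (g : X 1) : X 2 := act (box_conn 0 0 true isT) g.
Definition sqmin (g : X 1) : X 2 := act (box_conn 0 0 false isT) g.

Lemma src_cdeg (w : X 0) : src (cdeg w) = w.
Proof. by apply: act_id1; pw. Qed.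
Lemma tgt_cdeg (w : X 0) : tgt (cdeg w) = w.
Proof. by apply: act_id1; pw. Qed.

Lemma faces2_sqs1 g : faces2 (sqs1 g) = (g, g, cdeg (src g), cdeg (tgt g)).
Proof.
rewrite /faces2 /sqs1 /cdeg /src /tgt /faceX.
congr (_,_,_,_); [apply: act_id1 | apply: act_id1 | apply: act_swap | apply: act_swap]; pw; done.
Qed.
Lemma faces2_sqs2 g : faces2 (sqs2 g) = (cdeg (src g), cdeg (tgt g), g, g).
Proof.
rewrite /faces2 /sqs2 /cdeg /src /tgt /faceX.
congr (_,_,_,_); [apply: act_swap | apply: act_swap | apply: act_id1 | apply: act_id1]; pw; done.
Qed.
Lemma faces2_sqmax g : faces2 (sqmax g) = (g, cdeg (tgt g), g, cdeg (tgt g)).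
Proof.
rewrite /faces2 /sqmax /cdeg /src /tgt /faceX.
congr (_,_,_,_); [apply: act_id1 | apply: act_swap | apply: act_id1 | apply: act_swap]; pw; done.
Qed.
Lemma faces2_sqmin g : faces2 (sqmin g) = (cdeg (src g), g, cdeg (src g), g).
Proof.
rewrite /faces2 /sqmin /cdeg /src /tgt /faceX.
congr (_,_,_,_); [apply: act_swap | apply: act_id1 | apply: act_swap | apply: act_id1]; pw; done.
Qed.
End Act.
Ltac cmpH H := rewrite /dface /dsigma /dgamma /= ?enumI3 ?enumI2 ?enumI1 ?enumI0 /= ?enumI3 ?enumI2 ?enumI1 ?enumI0 /= in H.

Definition t0 : pt 1 := [tuple false].
Definition t1 : pt 1 := [tuple true].

Lemma pt1_cases (y : pt 1) : y = t0 \/ y = t1.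
Proof. by dt y; [right|left]; apply: val_inj. Qed.


Lemma PL1 (i j : 'I_3) d d' (u v : pt 2) : i < j -> dface 2 i d u = dface 2 j d' v ->
  [/\ u = dface 1 j.-1 d' (dsigma 1 j.-1 u), v = dface 1 i d (dsigma 1 i v)
    & dsigma 1 j.-1 u = dsigma 1 i v].
Proof.
case: i => [[|[|[|]]] //= Hi]; case: j => [[|[|[|]]] //= Hj] // _;
case: d; case: d'; dt u; dt v. all: move=> /(congr1 val) H. all: cmpH H. all: try discriminate H.
all: (split; apply: val_inj; cmp; done).
Qed.

Lemma PL2 (i j : 'I_3) d d' (w : pt 1) : i < j ->
  dface 2 i d (dface 1 j.-1 d' w) = dface 2 j d' (dface 1 i d w).
Proof.
case: i => [[|[|[|]]] //= Hi]; case: j => [[|[|[|]]] //= Hj] // _;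
case: d; case: d'; dt w; apply: val_inj; cmp; done.
Qed.

Lemma PL3 (i : 'I_3) d d' (u v : pt 2) : dface 2 i d u = dface 2 i d' v -> d = d' /\ u = v.
Proof.
case: i => [[|[|[|]]] //= Hi];
case: d; case: d'; dt u; dt v. all: move=> /(congr1 val) H. all: cmpH H. all: try discriminate H.
all: (split; [done| apply: val_inj; done]).
Qed.

Lemma PL4 (i : 'I_3) d (u : pt 2) : dsigma 2 i (dface 2 i d u) = u.
Proof. case: i => [[|[|[|]]] //= Hi]; case: d; dt u; apply: val_inj; cmp; done. Qed.

Lemma PL5 (i : 'I_3) d (u : pt 2) : nth false (dface 2 i d u) i = d.
Proof. case: i => [[|[|[|]]] //= Hi]; case: d; dt u; cmp; done. Qed.

Lemma PL7 (i i0 : 'I_3) e0 d : i != i0 -> nth false (dface 2 i0 e0 [tuple ~~d; ~~d]) i = ~~d.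
Proof. case: i => [[|[|[|]]] //= Hi]; case: i0 => [[|[|[|]]] //= Hi0]; case: e0; case: d; cmp; done. Qed.

Lemma PL8 (i : 'I_3) d (i0 : 'I_3) e0 (i1 : 'I_2) e1 :
  let p0 := dface 2 i0 e0 (dface 1 i1 e1 t0) in
  let p1 := dface 2 i0 e0 (dface 1 i1 e1 t1) in
  dface 2 i d (dsigma 2 i p0) = p0 -> dface 2 i d (dsigma 2 i p1) = p1 ->
  exists (c2 : 'I_2) e2, dsigma 2 i p0 = dface 1 c2 e2 t0 /\ dsigma 2 i p1 = dface 1 c2 e2 t1.
Proof.
case: i => [[|[|[|]]] //= Hi]; case: i0 => [[|[|[|]]] //= Hi0]; case: i1 => [[|[|]] //= Hi1];
case: d; case: e0; case: e1; rewrite /t0 /t1. 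
all: move=> /(congr1 val) H1 /(congr1 val) H2; cmpH H1; cmpH H2; try discriminate H1; try discriminate H2.
all: first [ exists (@Ordinal 2 0 isT), false; split; apply: val_inj; cmp; done
           | exists (@Ordinal 2 0 isT), true; split; apply: val_inj; cmp; done
           | exists (@Ordinal 2 1 isT), false; split; apply: val_inj; cmp; done
           | exists (@Ordinal 2 1 isT), true; split; apply: val_inj; cmp; done ].
Qed.

Lemma isf_le m n (f : pt m -> pt n) : is_face f -> m <= n.
Proof. elim=> // m' n' f' i e _ _ IH; exact: leqW. Qed.

Lemma isf_eq m n (f : pt m -> pt n) : is_face f -> m = n -> forall y, val (f y) = val y.
Proof.
case=> [n'|m' n' f' i e Hi Hf] // E.
by have H := isf_le Hf; rewrite E ltnn in H.
Qed.

Lemma isf_inv m n (f : pt m -> pt n) : is_face f -> m < n ->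
  exists n0 i e (g : pt m -> pt n0), [/\ n = n0.+1, i < n0.+1, is_face g &
     forall y, val (f y) = val (dface n0 i e (g y))].
Proof.
case=> [n'|m' n' f' i e Hi Hf]; first by rewrite ltnn.
by move=> _; exists n', i, e, f'.
Qed.

Lemma degen_box n m (d : pt n -> pt m) : is_degen d -> in_box d.
Proof. by case=> [m' i Hi|m' i e Hi]; [apply: box_degen | apply: box_conn]. Qed.

Definition fokb (p q : pt 3) (k : 'I_3) (e : bool) : bool :=
  [&& nth false p k != nth false q k,
      (0 < k) ==> ~~ ((nth false p k.-1 == e) && (nth false q k.-1 == e)) &
      (k.+1 < 3) ==> ~~ ((nth false p k.+1 == e) && (nth false q k.+1 == e))].

Lemma face_ok_fokb (phi : pt 1 -> pt 3) k e : face_ok k e phi -> fokb (phi t0) (phi t1) k e.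
Proof.
case=> H1 [H2 H3].
have cf : forall (j : 'I_3) v, nth false (phi t0) j = v -> nth false (phi t1) j = v ->
    coord_fixed phi j v.
  by move=> j v E0 E1 y; rewrite (tnth_nth false); case: (pt1_cases y) => ->.
apply/and3P; split.
- apply/negP => /eqP E.
  case Eq: (nth false (phi t1) k) E => E; [apply: H2 | apply: H1]; exact: cf.
- apply/implyP => Hk; apply/negP => /andP [/eqP E0 /eqP E1].
  have Hk1 : k.-1 < 3 by apply: leq_ltn_trans (leq_pred k) (ltn_ord k).
  apply: (H3 (Ordinal Hk1)); last exact: cf.
  by left; rewrite /= prednK.
- apply/implyP => Hk; apply/negP => /andP [/eqP E0 /eqP E1].
  apply: (H3 (Ordinal Hk)); last exact: cf.
  by right.
Qed.

Lemma PL9 (k : 'I_3) e (c : 'I_2) e' : exists (j : 'I_3) d' (c' : 'I_2) e'',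
  (j, d') != (k, e) /\ forall w, dface 2 k e (dface 1 c e' w) = dface 2 j d' (dface 1 c' e'' w).
Proof.
case: k => [[|[|[|]]] Hk] //; case: c => [[|[|]] Hc] //.
- by exists (@Ordinal 3 1 isT), e', (@Ordinal 2 0 isT), e; split => // w; case: e; case: e'; dt w; apply: val_inj; cmp.
- by exists (@Ordinal 3 2 isT), e', (@Ordinal 2 0 isT), e; split => // w; case: e; case: e'; dt w; apply: val_inj; cmp.
- by exists (@Ordinal 3 0 isT), e', (@Ordinal 2 0 isT), e; split => // w; case: e; case: e'; dt w; apply: val_inj; cmp.
- by exists (@Ordinal 3 2 isT), e', (@Ordinal 2 1 isT), e; split => // w; case: e; case: e'; dt w; apply: val_inj; cmp.
- by exists (@Ordinal 3 0 isT), e', (@Ordinal 2 1 isT), e; split => // w; case: e; case: e'; dt w; apply: val_inj; cmp.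
- by exists (@Ordinal 3 1 isT), e', (@Ordinal 2 1 isT), e; split => // w; case: e; case: e'; dt w; apply: val_inj; cmp.
Qed.

Section Fill.
Variable X : marked_cset.
Variable k : 'I_3.
Variable e : bool.
Variable xs : 'I_3 -> bool -> X 2.
Variable EL : pt 3 -> pt 3 -> X 1.
Definition ELf (i : nat) d (c : nat) e' :=
  EL (dface 2 i d (dface 1 c e' t0)) (dface 2 i d (dface 1 c e' t1)).
Hypothesis Hf : forall i d (c : 'I_2) e', (i, d) != (k, e) -> faceX (xs i d) c e' = ELf i d c e'.
Hypothesis HM2 : forall i d, (i, d) != (k, e) -> marked (xs i d).
Hypothesis HM1 : forall i d (c : 'I_2) e', (i, d) != (k, e) ->
  fokb (dface 2 i d (dface 1 c e' t0)) (dface 2 i d (dface 1 c e' t1)) k e -> marked (ELf i d c e').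

Lemma compat_lt (i j : 'I_3) d d' : i < j -> (i, d) != (k, e) -> (j, d') != (k, e) ->
  forall m (psi psi' : pt m -> pt 2) (h : in_box psi) (h' : in_box psi'),
  (forall y, dface 2 i d (psi y) = dface 2 j d' (psi' y)) -> act h (xs i d) = act h' (xs j d').
Proof.
move=> Hij Hi Hj m psi psi' h h' Heq.
have Hj1 : j.-1 < 2 by case: j Hij {Hj Heq} => [[|[|[|]]] ?].
have Hi2 : i < 2 by apply: leq_trans Hij _; rewrite -ltnS; exact: ltn_ord.
have hchi := @box_comp _ _ _ _ _ h (box_degen 1 j.-1 Hj1).
have hchi' := @box_comp _ _ _ _ _ h' (box_degen 1 i Hi2).
rewrite (act_fact hchi (box_face 1 j.-1 d' Hj1) h); last first.
  by move=> y; case: (PL1 Hij (Heq y)).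
rewrite (act_fact hchi' (box_face 1 i d Hi2) h'); last first.
  by move=> y; case: (PL1 Hij (Heq y)).
have -> : act (box_face 1 j.-1 d' Hj1) (xs i d) = faceX (xs i d) (Ordinal Hj1) d'.
  exact: (act_ext _ _ _ _ _ _ _ (fun _ => erefl)).
have -> : act (box_face 1 i d Hi2) (xs j d') = faceX (xs j d') (Ordinal Hi2) d.
  exact: (act_ext _ _ _ _ _ _ _ (fun _ => erefl)).
rewrite Hf // Hf // /ELf /= !(PL2 _ _ _ Hij).
apply: act_ext => y /=.
by case: (PL1 Hij (Heq y)).
Qed.

Lemma ob : openbox k e xs.
Proof.
split.
- move=> i j d d' Hi Hj m psi psi' h h' Heq.
  case: (ltngtP i j) => Hij.
  + exact: compat_lt.
  + by symmetry; apply: compat_lt => // y; rewrite Heq.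
  + have Eij : i = j by apply: val_inj.
    subst j.
    have y0 : pt m := [tuple false | _ < m].
    have [Ed _] := PL3 (Heq y0). subst d'.
    apply: act_ext => y; exact: (PL3 (Heq y)).2.
- move=> i d Hne m psi h [Hm Hb].
  case: Hb => [[l [dd [psi0 [hpsi0 [hdd Hphi]]]]] | [Hface Hok]].
  + have hrho := @box_comp _ _ _ _ _ hpsi0 (box_degen 2 i (ltn_ord i)).
    have hdd' := degen_box hdd.
    rewrite (act_fact hdd' hrho h); last by move=> y; rewrite /= -Hphi PL4.
    apply: marked_degen; exists l, dd, hdd', (act hrho (xs i d)); done.
  + move: m psi h Hm Hface Hok.
    case=> [|[|[|[|m]]]] psi h Hm Hface Hok //.
    *
      have [n0 [i0 [e0 [g [En0 Hi0 Hg Eg]]]]] := isf_inv Hface (isT : 1 < 3).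
      case: En0 => En0; subst n0.
      have [n1 [i1 [e1 [g1 [En1 Hi1 Hg1 Eg1]]]]] := isf_inv Hg (isT : 1 < 2).
      case: En1 => En1; subst n1.
      have g1E : forall y, g1 y = y := fun y => val_inj (isf_eq Hg1 erefl y).
      have gE : forall y, g y = dface 1 (Ordinal Hi1) e1 y.
        by move=> y; apply: val_inj; rewrite Eg1 g1E.
      have Ephi : forall y, dface 2 i d (psi y) =
          dface 2 (Ordinal Hi0) e0 (dface 1 (Ordinal Hi1) e1 y).
        by move=> y; apply: val_inj; rewrite Eg gE.
      have H8 := @PL8 i d (Ordinal Hi0) e0 (Ordinal Hi1) e1.
      cbv zeta in H8; rewrite -!Ephi !PL4 in H8.
      have [c2 [e2 [E0 E1]]] := H8 erefl erefl.
      have Epsi : forall y, psi y = dface 1 c2 e2 y.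
        by move=> y; case: (pt1_cases y) => ->.
      have -> : act h (xs i d) = faceX (xs i d) c2 e2 by apply: act_ext.
      rewrite Hf //; apply: HM1 => //.
      have := face_ok_fokb Hok; by rewrite /= !Epsi.
    *
      have [n0 [i0 [e0 [g [En0 Hi0 Hg Eg]]]]] := isf_inv Hface (isT : 2 < 3).
      case: En0 => En0; subst n0.
      have gE : forall y, g y = y := fun y => val_inj (isf_eq Hg erefl y).
      have Ephi : forall y, dface 2 i d (psi y) = dface 2 (Ordinal Hi0) e0 y.
        by move=> y; apply: val_inj; rewrite Eg gE.
      have Eii : i = Ordinal Hi0.
        apply/eqP; apply/negPn/negP => Hn.
        have := congr1 (fun s : pt 3 => nth false s i) (Ephi [tuple ~~d; ~~d]).
        cbv beta; rewrite PL5 PL7 //; by destruct d.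
      subst i.
      have -> : act h (xs (Ordinal Hi0) d) = xs (Ordinal Hi0) d.
        apply: act_idm => y; exact: (PL3 (Ephi y)).2.
      exact: HM2.
    *
      exfalso.
      have E := isf_eq Hface erefl [tuple ~~d; ~~d; ~~d].
      have := congr1 (fun s => nth false s i) E.
      rewrite /= PL5.
      by case: i Hne {Hok Hface E} => [[|[|[|]]] Hi] //= _; case: d.
    * by have := isf_le Hface.
Qed.

Lemma fill3 : comical X -> exists s : X 2, marked s /\
   forall (c : 'I_2) e', faceX s c e' = ELf k e c e'.
Proof.
move=> [hX1 hX2].
have [x [Hx Hpres]] := hX1 2 k e xs ob.
have Hprime : preserves (fun m (phi : pt m -> pt 3) => prime_marked k e phi) x.
  move=> m phi h [Hb | [Hm [Hface Hncf]]]; first exact: Hpres.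
  case: Hm => Hm; subst m.
  have [n0 [i0 [e0 [g [En0 Hi0 Hg Eg]]]]] := isf_inv Hface (isT : 2 < 3).
  case: En0 => En0; subst n0.
  have gE : forall y, g y = y := fun y => val_inj (isf_eq Hg erefl y).
  have Ephi : forall y, phi y = dface 2 (Ordinal Hi0) e0 y.
    by move=> y; apply: val_inj; rewrite Eg gE.
  have -> : act h x = faceX x (Ordinal Hi0) e0 by apply: act_ext.
  have Hne : (Ordinal Hi0, e0) != (k, e).
    apply/eqP => -[Ek Ee]; apply: Hncf => y.
    rewrite (tnth_nth false) Ephi -Ee.
    have -> : (k : nat) = Ordinal Hi0 by rewrite -Ek.
    exact: PL5.
  rewrite Hx //; exact: HM2.
have Htau := hX2 1 k e x Hprime.
exists (faceX x k e); split.
  exact: (Htau 2 (dface 2 k e) (box_face 2 k e (ltn_ord k)) (or_intror (leqnn 3))).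
move=> c e'.
have [j [d' [c' [e'' [Hne Ew]]]]] := PL9 k e c e'.
rewrite /faceX (act_swap (box_face 1 c e' (ltn_ord c)) (box_face 2 k e (ltn_ord k))
   (box_face 1 c' e'' (ltn_ord c')) (box_face 2 j d' (ltn_ord j)) x Ew).
rewrite -/(faceX x j d') Hx // -/(faceX (xs j d') c' e'') Hf //.
by rewrite /ELf !Ew.
Qed.
End Fill.

Lemma faces2P (X : cubical_set) (s : X 2) l r b t : faces2 s = (l, r, b, t) ->
  forall (c : 'I_2) e, faceX s c e = if val c == 0 then (if e then r else l) else (if e then t else b).
Proof.
rewrite /faces2 => -[<- <- <- <-] [[|[|c]] Hc] e //=; case: e;
  by congr faceX; apply: val_inj.
Qed.

Lemma vert (X : cubical_set) (s : X 2) e1 e2 :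
  faceX (faceX s ord0 e1) ord0 e2 = faceX (faceX s ord_max e2) ord0 e1.
Proof. apply: act_swap => y; apply: val_inj; case: e1; case: e2; dt y; cmp; done. Qed.

Section Boxes.
Variable X : marked_cset.
Variables f g : X 1.
Hypothesis hfg : tgt f = src g.
Hypothesis hX : comical X.

Lemma marked_cdeg (w : X 0) : marked (cdeg w).
Proof. apply: marked_degen; exists 0, (dsigma 0 0), (box_degen 0 0 isT), w; split => //; exact: isdeg_sigma. Qed.
Lemma marked_sqs1 (w : X 1) : marked (sqs1 w).
Proof. apply: marked_degen; exists 1, (dsigma 1 0), (box_degen 1 0 isT), w; split => //; exact: isdeg_sigma. Qed.
Lemma marked_sqs2 (w : X 1) : marked (sqs2 w).
Proof. apply: marked_degen; exists 1, (dsigma 1 1), (box_degen 1 1 isT), w; split => //; exact: isdeg_sigma. Qed.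
Lemma marked_sqmax (w : X 1) : marked (sqmax w).
Proof. apply: marked_degen; exists 1, (dgamma 0 0 true), (box_conn 0 0 true isT), w; split => //; exact: isdeg_conn. Qed.
Lemma marked_sqmin (w : X 1) : marked (sqmin w).
Proof. apply: marked_degen; exists 1, (dgamma 0 0 false), (box_conn 0 0 false isT), w; split => //; exact: isdeg_conn. Qed.

Definition ELg (xz : pt 3 -> X 1) (lab : pt 3 -> nat) (p q : pt 3) : X 1 :=
  match lab p, lab q with
  | 0, 0 => cdeg (src f) | 0, 1 => f | 0, 2 => xz q | 1, 1 => cdeg (src g)
  | 1, 2 => g | _, _ => cdeg (tgt g) end.

Definition labB (p : pt 3) : nat :=
  let c := nth false p in if c 1 then 2 else if c 0 || c 2 then 1 else 0.

Variable a : X 1.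
Variable s : X 2.
Hypothesis hs : marked s.

Definition xsB (i : 'I_3) (d : bool) : X 2 :=
  match nat_of_ord i, d with
  | 0, false => s | 0, true => sqs2 g | 1, false => sqmax f | 1, true => sqs1 (cdeg (tgt g))
  | _, _ => sqs1 g end.

Ltac fsimp := rewrite ?(faces2P (faces2_sqs1 _)) ?(faces2P (faces2_sqs2 _))
   ?(faces2P (faces2_sqmax _)) ?(faces2P (faces2_sqmin _)) ?src_cdeg ?tgt_cdeg ?hfg.

Lemma boxB : faces2 s = (f, cdeg (tgt g), a, g) ->
  exists s' : X 2, marked s' /\ faces2 s' = (a, g, f, cdeg (tgt g)).
Proof.
move=> Hs.
have Hf : forall i d (c : 'I_2) e', (i, d) != (@Ordinal 3 2 isT, false) ->
   faceX (xsB i d) c e' = ELf (ELg (fun _ => a) labB) i d c e'.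
  move=> [[|[|[|?]]] Hi] [] [[|[|?]] Hc] [] //= Hne; rewrite /xsB /=; fsimp; rewrite ?(faces2P Hs) /=;
  rewrite /ELf /ELg /labB; cmp; fsimp; done.
have HM2 : forall i d, (i, d) != (@Ordinal 3 2 isT, false) -> marked (xsB i d).
  move=> [[|[|[|?]]] Hi] [] //= Hne; rewrite /xsB /=;
  by [apply: marked_sqs1 | apply: marked_sqs2 | apply: marked_sqmax | apply: marked_sqmin].
have HM1 : forall i d (c : 'I_2) e', (i, d) != (@Ordinal 3 2 isT, false) ->
  fokb (dface 2 i d (dface 1 c e' t0)) (dface 2 i d (dface 1 c e' t1)) (@Ordinal 3 2 isT) false ->
  marked (ELf (ELg (fun _ => a) labB) i d c e').
  move=> [[|[|[|?]]] Hi] [] [[|[|?]] Hc] [] //= Hne; rewrite /fokb /ELf /ELg /labB; cmp => //;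
  move=> _; exact: marked_cdeg.
have [s' [Hm Hfs]] := fill3 Hf HM2 HM1 hX.
exists s'; split => //.
rewrite /faces2 !Hfs /ELf /ELg /labB /=; cmp; fsimp; done.
Qed.
Variables (b : X 1) (t : X 2).
Hypothesis ht : marked t.

Definition labC (p : pt 3) : nat :=
  let c := nth false p in if ~~ c 0 && ~~ c 1 then 0 else if c 1 && c 2 then 2 else 1.
Definition xsC (i : 'I_3) (d : bool) : X 2 :=
  match nat_of_ord i, d with
  | 0, false => s | 0, true => sqmin g | 1, false => sqs2 f | 1, true => sqs1 g | _, _ => sqmax f end.
Lemma boxC : faces2 s = (cdeg (src f), g, f, a) ->
  exists s' : X 2, marked s' /\ faces2 s' = (a, g, f, cdeg (tgt g)).
Proof.
move=> Hs.
have Hf : forall i d (c : 'I_2) e', (i, d) != (@Ordinal 3 2 isT, true) ->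
   faceX (xsC i d) c e' = ELf (ELg (fun _ => a) labC) i d c e'.
  move=> [[|[|[|?]]] Hi] [] [[|[|?]] Hc] [] //= Hne; rewrite /xsC /=; fsimp; rewrite ?(faces2P Hs) /=;
  rewrite /ELf /ELg /labC; cmp; fsimp; done.
have HM2 : forall i d, (i, d) != (@Ordinal 3 2 isT, true) -> marked (xsC i d).
  move=> [[|[|[|?]]] Hi] [] //= Hne; rewrite /xsC /=;
  by [apply: marked_sqs1 | apply: marked_sqs2 | apply: marked_sqmax | apply: marked_sqmin].
have HM1 : forall i d (c : 'I_2) e', (i, d) != (@Ordinal 3 2 isT, true) ->
  fokb (dface 2 i d (dface 1 c e' t0)) (dface 2 i d (dface 1 c e' t1)) (@Ordinal 3 2 isT) true ->
  marked (ELf (ELg (fun _ => a) labC) i d c e').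
  move=> [[|[|[|?]]] Hi] [] [[|[|?]] Hc] [] //= Hne; rewrite /fokb /ELf /ELg /labC; cmp => //;
  move=> _; exact: marked_cdeg.
have [s' [Hm Hfs]] := fill3 Hf HM2 HM1 hX.
exists s'; split => //.
rewrite /faces2 !Hfs /ELf /ELg /labC /=; cmp; fsimp; done.
Qed.

Definition labD (p : pt 3) : nat :=
  let c := nth false p in if ~~ c 0 && ~~ c 2 then 0 else if c 1 && c 2 then 2 else 1.
Definition xsD (i : 'I_3) (d : bool) : X 2 :=
  match nat_of_ord i, d with
  | 0, false => s | 0, true => sqmin g | 1, false => sqmax f | 2, false => sqs2 f | _, _ => sqs1 g end.
Lemma boxD : faces2 s = (f, a, cdeg (src f), g) ->
  exists s' : X 2, marked s' /\ faces2 s' = (a, g, f, cdeg (tgt g)).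
Proof.
move=> Hs.
have Hf : forall i d (c : 'I_2) e', (i, d) != (@Ordinal 3 1 isT, true) ->
   faceX (xsD i d) c e' = ELf (ELg (fun _ => a) labD) i d c e'.
  move=> [[|[|[|?]]] Hi] [] [[|[|?]] Hc] [] //= Hne; rewrite /xsD /=; fsimp; rewrite ?(faces2P Hs) /=;
  rewrite /ELf /ELg /labD; cmp; fsimp; done.
have HM2 : forall i d, (i, d) != (@Ordinal 3 1 isT, true) -> marked (xsD i d).
  move=> [[|[|[|?]]] Hi] [] //= Hne; rewrite /xsD /=;
  by [apply: marked_sqs1 | apply: marked_sqs2 | apply: marked_sqmax | apply: marked_sqmin].
have HM1 : forall i d (c : 'I_2) e', (i, d) != (@Ordinal 3 1 isT, true) ->
  fokb (dface 2 i d (dface 1 c e' t0)) (dface 2 i d (dface 1 c e' t1)) (@Ordinal 3 1 isT) true ->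
  marked (ELf (ELg (fun _ => a) labD) i d c e').
  move=> [[|[|[|?]]] Hi] [] [[|[|?]] Hc] [] //= Hne; rewrite /fokb /ELf /ELg /labD; cmp => //;
  move=> _; exact: marked_cdeg.
have [s' [Hm Hfs]] := fill3 Hf HM2 HM1 hX.
exists s'; split => //.
rewrite /faces2 !Hfs /ELf /ELg /labD /=; cmp; fsimp; done.
Qed.

Definition labA (p : pt 3) : nat :=
  let c := nth false p in if ~~ c 0 && ~~ c 1 && ~~ c 2 then 0 else if c 0 && ~~ c 1 && ~~ c 2 then 1 else 2.
Definition xsA (i : 'I_3) (d : bool) : X 2 :=
  match nat_of_ord i, d with
  | 0, true => sqmax g | 1, false => t | 2, false => s | _, _ => sqs1 (cdeg (tgt g)) end.
Lemma boxA : faces2 s = (a, g, f, cdeg (tgt g)) -> faces2 t = (b, g, f, cdeg (tgt g)) ->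
  exists s' : X 2, marked s' /\ faces2 s' = (b, cdeg (tgt g), a, cdeg (tgt g)).
Proof.
move=> Hs Ht.
have Hf : forall i d (c : 'I_2) e', (i, d) != (@Ordinal 3 0 isT, false) ->
   faceX (xsA i d) c e' = ELf (ELg (fun q : pt 3 => if nth false q 1 then a else b) labA) i d c e'.
  move=> [[|[|[|?]]] Hi] [] [[|[|?]] Hc] [] //= Hne; rewrite /xsA /=; fsimp; rewrite ?(faces2P Hs) ?(faces2P Ht) /=;
  rewrite /ELf /ELg /labA; cmp; fsimp; done.
have HM2 : forall i d, (i, d) != (@Ordinal 3 0 isT, false) -> marked (xsA i d).
  move=> [[|[|[|?]]] Hi] [] //= Hne; rewrite /xsA /=;
  by [apply: marked_sqs1 | apply: marked_sqs2 | apply: marked_sqmax | apply: marked_sqmin].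
have HM1 : forall i d (c : 'I_2) e', (i, d) != (@Ordinal 3 0 isT, false) ->
  fokb (dface 2 i d (dface 1 c e' t0)) (dface 2 i d (dface 1 c e' t1)) (@Ordinal 3 0 isT) false ->
  marked (ELf (ELg (fun q : pt 3 => if nth false q 1 then a else b) labA) i d c e').
  move=> [[|[|[|?]]] Hi] [] [[|[|?]] Hc] [] //= Hne; rewrite /fokb /ELf /ELg /labA; cmp => //;
  move=> _; exact: marked_cdeg.
have [s' [Hm Hfs]] := fill3 Hf HM2 HM1 hX.
exists s'; split => //.
rewrite /faces2 !Hfs /ELf /ELg /labA /=; cmp; fsimp; done.
Qed.
End Boxes.

Lemma to10 (X : marked_cset) (hX : comical X) (f g a : X 1) (hfg : tgt f = src g) :
  composite f g a -> exists s : X 2, marked s /\ faces2 s = (a, g, f, cdeg (tgt g)).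
Proof.
case=> s [Hm [H|[H|[H|H]]]].
- by exists s.
- by have := boxD hfg hX Hm H.
- by have := boxB hfg hX Hm H.
- by have := boxC hfg hX Hm H.
Qed.

Lemma verts (X : marked_cset) (f g a : X 1) (s : X 2) :
  faces2 s = (a, g, f, cdeg (tgt g)) -> src a = src f /\ tgt a = tgt g.
Proof.
rewrite /faces2 => -[Ea _ Ef Et]; split.
- by rewrite /src -Ea -Ef vert.
- rewrite /tgt -Ea vert Et; exact: src_cdeg.
Qed.

Unset Implicit Arguments.
Theorem proposition4p4 (X : marked_cset) (hX : comical X) (f g : X 1)
    (hfg : tgt f = src g) (a b : X 1) :
  composite f g a -> composite f g b -> homotopic a b.
Proof.
move=> /(to10 hX hfg) [sa [Ha Hsa]] /(to10 hX hfg) [sb [Hb Hsb]].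
have [h [Hh Hfh]] := boxA hX Ha Hb Hsa Hsb.
have [Sa Ta] := verts Hsa.
have [Sb Tb] := verts Hsb.
split; first by rewrite Sa Sb.
split; first by rewrite Ta Tb.
by exists h; rewrite Ta.
Qed.
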